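(* Let $\widehat{\zeta}_1,\dots,\widehat{\zeta}_N\in\mathbb{R}$, $\widehat{\mathbb{P}}_N=\frac1N\sum_{i=1}^N\delta_{\widehat{\zeta}_i}$, $\eta\in\mathbb{R}$, $\bar\zeta=\frac1N\sum_{i=1}^N\widehat{\zeta}_i$ and $\widehat\sigma^2=\frac1N\sum_{i=1}^N(\widehat{\zeta}_i-\eta)^2$. Let $\varepsilon>0$ with $\varepsilon^2\ge(\bar\zeta-\eta)^2$. Then $$\sup\Big\{\mathbb{E}_{\mathbb{Q}}[(\zeta-\eta)^2]:\ \mathbb{Q}\in\mathcal{P}_2(\mathbb{R}),\ W_2(\mathbb{Q},\widehat{\mathbb{P}}_N)\le\varepsilon,\ \mathbb{E}_{\mathbb{Q}}[\zeta]=\eta\Big\}=\Big(\sqrt{\widehat\sigma^2-(\bar\zeta-\eta)^2}+\sqrt{\varepsilon^2-(\bar\zeta-\eta)^2}\Big)^2.$$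
   Context: $\mathcal{P}_2(\mathbb{R})$ is the set of Borel probability measures on $\mathbb{R}$ with finite second moment, and $W_2(\mu,\nu)=(\inf_\Pi\int|s-t|^2\,\Pi(ds,dt))^{1/2}$, the infimum over couplings $\Pi$ of $\mu$ and $\nu$. *)

(* Defs.v *)
From HB Require Import structures.
From mathcomp Require Import all_boot all_order all_algebra.
From mathcomp Require Import all_classical all_reals all_analysis.
Set Implicit Arguments. Unset Strict Implicit. Unset Printing Implicit Defensive.
Import Order.TTheory GRing.Theory Num.Theory.
Import numFieldNormedType.Exports.
Local Open Scope classical_set_scope.
Local Open Scope ring_scope.
Local Open Scope ereal_scope.

(* Borel probability measures on R: [probability R R] (R with its canonical
   Borel sigma-algebra).  Finite second moment: *)
Definition finite_second_moment (R : realType) (Q : probability R R) : Prop :=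
  \int[Q]_x (x ^+ 2)%:E < +oo.

Definition empirical (R : realType) (N : nat) (zeta : 'I_N -> R) (A : set R)
  : \bar R :=
  (N%:R^-1)%:E * \sum_(i < N) \d_(zeta i) A.

Definition coupling (R : realType) (mu nu : set R -> \bar R)
  (Pi : probability (R * R)%type R) : Prop :=
  forall A : set R, measurable A ->
    Pi (A `*` setT) = mu A /\ Pi (setT `*` A) = nu A.

Definition W2sq (R : realType) (mu nu : set R -> \bar R) : \bar R :=
  ereal_inf [set \int[Pi]_p (`|p.1 - p.2| ^+ 2)%:E
            | Pi in [set Pi | coupling mu nu Pi]].

Definition W2 (R : realType) (mu nu : set R -> \bar R) : \bar R :=
  match W2sq mu nu with
  | r%:E => (Num.sqrt r)%:E
  | +oo => +oo
  | -oo => 0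
  end.

(* Main.v *)
Require Import Defs.
From HB Require Import structures.
From mathcomp Require Import all_boot all_order all_algebra.
From mathcomp Require Import all_classical all_reals all_analysis.
From mathcomp Require Import measurable_realfun.
From mathcomp Require Import ring lra.
Import Order.TTheory GRing.Theory Num.Theory.
Import numFieldNormedType.Exports.
Local Open Scope classical_set_scope.
Local Open Scope ring_scope.
Set Warnings "-notation-overridden,-ambiguous-paths,-notation-incompatible-prefix".
Section discr.
Context d (T : measurableType d) (R : realType).
Variables (n : nat) (pt : nat -> T).

Definition wn : {nonneg R} := ((n.+1)%:R^-1)%:nng.

Definition discr : set T -> \bar R :=
  mscale wn (msum (fun k => (\d_(pt k) : {measure set T -> \bar R})) n.+1).

HB.instance Definition _ := Measure.on discr.

Lemma discrE A : discr A = (((n.+1)%:R^-1) * \sum_(k < n.+1) (\1_A (pt k) : R))%:E.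
Proof.
rewrite /discr /mscale /= EFinM; congr (_ * _)%E; rewrite /msum.
rewrite -sumEFin; by apply: eq_bigr.
Qed.

Let discr_setT : discr setT = 1%E.
Proof.
rewrite discrE; under eq_bigr do rewrite indicT.
by rewrite sumr_const card_ord -[X in _ * X]mulr_natr mul1r mulVf.
Qed.

HB.instance Definition _ := Measure_isProbability.Build _ _ _ discr discr_setT.

End discr.
Section discr_int.
Context d (T : measurableType d) (R : realType).
Variables (n : nat) (pt : nat -> T).
Local Open Scope ereal_scope.

Lemma discr_ge0_int (h : T -> \bar R) : measurable_fun [set: T] h ->
  (forall x, 0 <= h x) ->
  \int[@discr d T R n pt]_x h x = ((n.+1)%:R^-1)%:E * \sum_(k < n.+1) h (pt k).
Proof.
move=> mh h0; rewrite /discr ge0_integral_mscale//; congr (_ * _).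
rewrite ge0_integral_measure_sum//; apply: eq_bigr => k _.
by rewrite integral_dirac// diracT mul1e.
Qed.

Lemma discr_int (f : T -> R) : measurable_fun [set: T] f ->
  \int[@discr d T R n pt]_x (f x)%:E = ((n.+1)%:R^-1 * \sum_(k < n.+1) f (pt k))%:E.
Proof.
move=> mf; have mF : measurable_fun [set: T] (EFin \o f) by exact/measurable_EFinP.
have m1 := measurable_funepos mF; have m2 := measurable_funeneg mF.
rewrite integralE !discr_ge0_int//.
have E1 k : (EFin \o f)^\+ (pt k) = (Num.max (f (pt k)) 0%R)%:E.
  by rewrite funeposE /= EFin_max.
have E2 k : (EFin \o f)^\- (pt k) = (Num.max (- f (pt k)) 0%R)%:E.
  by rewrite funenegE /= EFin_max.
under eq_bigr do rewrite E1. under [X in _ - _ * X]eq_bigr do rewrite E2.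
rewrite !sumEFin -!EFinM -EFinB -mulrBr -sumrB; congr (_ * _)%:E.
apply: eq_bigr => k _; case: (lerP 0 (f (pt k))) => h.
  by rewrite max_r ?subr0// oppr_le0.
by rewrite max_l ?sub0r ?opprK// oppr_ge0 ltW.
Qed.
End discr_int.

Section partC.
Local Open Scope ereal_scope.
Section marg.
Context (R : realType).

Lemma marg1 (Pi : {measure set (R * R)%type -> \bar R}) (mu : {measure set R -> \bar R})
  (f : R -> \bar R) : measurable_fun [set: R] f ->
  (forall A, measurable A -> Pi (A `*` setT) = mu A) ->
  \int[Pi]_p f p.1 = \int[mu]_x f x.
Proof.
move=> mf hm.
have mfst : measurable_fun [set: (R * R)%type] fst by exact: measurable_fst.
rewrite (eq_measure_integral (pushforward Pi fst)); last first.
  move=> A mA _; rewrite /pushforward -hm//; congr (Pi _).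
  apply/funext => -[x y]; apply/propext; split; [by case | by move=> ?; split].
rewrite [RHS]integralE [LHS]integralE.
have mp := measurable_funepos mf; have mn := measurable_funeneg mf.
rewrite (ge0_integral_pushforward mfst Pi (D:=setT) (f:=f^\+) measurableT mp); last by move=> x _; exact: funepos_ge0.
rewrite (ge0_integral_pushforward mfst Pi (D:=setT) (f:=f^\-) measurableT mn); last by move=> x _; exact: funeneg_ge0.
rewrite preimage_setT.
by rewrite funepos_comp funeneg_comp.
Qed.

Lemma marg2 (Pi : {measure set (R * R)%type -> \bar R}) (mu : {measure set R -> \bar R})
  (f : R -> \bar R) : measurable_fun [set: R] f ->
  (forall A, measurable A -> Pi (setT `*` A) = mu A) ->
  \int[Pi]_p f p.2 = \int[mu]_x f x.
Proof.
move=> mf hm.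
have msnd : measurable_fun [set: (R * R)%type] snd by exact: measurable_snd.
rewrite (eq_measure_integral (pushforward Pi snd)); last first.
  move=> A mA _; rewrite /pushforward -hm//; congr (Pi _).
  apply/funext => -[x y]; apply/propext; split; [by case | by move=> ?; split].
rewrite [RHS]integralE [LHS]integralE.
have mp := measurable_funepos mf; have mn := measurable_funeneg mf.
rewrite (ge0_integral_pushforward msnd Pi (D:=setT) (f:=f^\+) measurableT mp); last by move=> x _; exact: funepos_ge0.
rewrite (ge0_integral_pushforward msnd Pi (D:=setT) (f:=f^\-) measurableT mn); last by move=> x _; exact: funeneg_ge0.
rewrite preimage_setT.
by rewrite funepos_comp funeneg_comp.
Qed.
End marg.
End partC.

From mathcomp Require Import lra.
Lemma frac_le (R : realType) (a b t : R) : 0 <= a -> 0 <= b -> 0 < t ->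
  (b + t) / (a + t) * a ^+ 2 <= (b + t) * a.
Proof.
move=> a0 b0 t0; rewrite mulrAC -mulrA ler_pM2l; last lra.
rewrite ler_pdivrMr; last lra.
rewrite expr2; nra.
Qed.

Lemma final_real (R : realType) (S v w : R) : 0 <= v -> 0 <= w ->
  (forall lam, 0 < lam -> forall del, 0 < del ->
     S <= (1 + lam) * v + (1 + lam^-1) * (w + del)) ->
  S <= (Num.sqrt v + Num.sqrt w) ^+ 2.
Proof.
move=> v0 w0 H.
have H1 lam : 0 < lam -> S <= (1 + lam) * v + (1 + lam^-1) * w.
  move=> l0; apply/ler_addgt0Pr => e e0.
  have c0 : 0 < 1 + lam^-1 by rewrite ltr_wpDr // invr_ge0 ltW.
  have := H lam l0 (e / (1 + lam^-1)) (divr_gt0 e0 c0).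
  by rewrite mulrDr mulrCA divff ?mulr1 ?addrA // gt_eqF.
set a := Num.sqrt v; set b := Num.sqrt w.
have a0 : 0 <= a by exact: sqrtr_ge0.
have b0 : 0 <= b by exact: sqrtr_ge0.
have va : v = a ^+ 2 by rewrite sqr_sqrtr.
have wb : w = b ^+ 2 by rewrite sqr_sqrtr.
have H2 t : 0 < t -> S <= (a + b) ^+ 2 + t * (a + b).
  move=> t0; have l0 : 0 < (b + t) / (a + t) by apply: divr_gt0; lra.
  apply: (le_trans (H1 _ l0)); rewrite invf_div va wb.
  have h1 := @frac_le R a b t a0 b0 t0; have h2 := @frac_le R b a t b0 a0 t0.
  rewrite !mulrDl !mul1r; lra.
apply/ler_addgt0Pr => e e0.
have K0 : 0 < a + b + 1 by lra.
apply: (le_trans (H2 _ (divr_gt0 e0 K0))); rewrite lerD2l.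
rewrite mulrAC ler_pdivrMr //; nra.
Qed.

Section partE.
Local Open Scope ereal_scope.

Lemma empirical_discr (R : realType) (N' : nat) (zeta : 'I_N'.+1 -> R) (A : set R) :
  empirical zeta A = @discr _ R R N' (fun k => zeta (inord k)) A.
Proof.
rewrite discrE /empirical EFinM; congr (_ * _).
rewrite -sumEFin; apply: eq_bigr => i _; by rewrite inord_val.
Qed.

Section ub.
Context (R : realType).

Lemma mfst : measurable_fun [set: (R * R)%type] (fun p : R * R => p.1).
Proof. exact: measurable_fst. Qed.
Lemma msnd : measurable_fun [set: (R * R)%type] (fun p : R * R => p.2).
Proof. exact: measurable_snd. Qed.

Lemma ub_coupling (N' : nat) (zeta : 'I_N'.+1 -> R) (eta lam c : R)
  (Q : probability R R) (Pi : probability (R * R)%type R) :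
  (0 < lam)%R -> finite_second_moment Q -> \int[Q]_x x%:E = eta%:E ->
  coupling (Q : set R -> \bar R) (empirical zeta) Pi ->
  \int[Pi]_p (`|p.1 - p.2| ^+ 2)%:E = c%:E ->
  forall zbar sigma2, zbar = ((\sum_(i < N'.+1) zeta i) / N'.+1%:R)%R ->
  sigma2 = ((\sum_(i < N'.+1) (zeta i - eta) ^+ 2) / N'.+1%:R)%R ->
  \int[Q]_x ((x - eta) ^+ 2)%:E <=
    ((1 + lam) * (sigma2 - (zbar - eta) ^+ 2) + (1 + lam^-1) * (c - (zbar - eta) ^+ 2))%:E.
Proof.
move=> lam0 fsm hmean hcoup hcost zbar sigma2 hzbar hsigma2.
set m := (zbar - eta)%R.
set il := (lam^-1)%R.
set zt := fun k => zeta (inord k).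
have h1 A : measurable A -> Pi (A `*` setT) = Q A by move=> mA; case: (hcoup A mA).
have h2 A : measurable A -> Pi (setT `*` A) = @discr _ R R N' zt A.
  by move=> mA; case: (hcoup A mA) => _ ->; rewrite empirical_discr.
set a := (1 + lam)%R.
set K := (2 * m * (1 + il))%R.
set b := (- 2 * m * (1 + lam) - K)%R.
set c0 := ((1 + lam) * (2 * m * eta + m ^+ 2) + (1 + il) * m ^+ 2)%R.
set g := fun t : R => (a * (t - eta) ^+ 2 + b * t + c0)%R.
have mg : measurable_fun [set: R] g.
  apply: measurable_funD => //; apply: measurable_funD => //.
    have M2 : measurable_fun [set: R] (fun t => (t - eta) ^+ 2)%R.
      by apply: measurable_funX; exact: measurable_funB.
    have H := @measurable_funM _ R R setT (fun _ : R => a) (fun t : R => (t - eta) ^+ 2)%R (measurable_cst _) M2.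
    exact: H.
have mU : measurable_fun [set: R] (fun x : R => ((x - eta) ^+ 2)%:E).
  by apply/measurable_EFinP; apply: measurable_funX; exact: measurable_funB.
rewrite -(@marg1 R Pi Q _ mU h1).
have mD : measurable_fun [set: (R * R)%type] (fun p : R * R => (p.1 - p.2) ^+ 2)%R.
  by apply: measurable_funX; apply: measurable_funB; [exact: mfst|exact: msnd].
set h := fun p : R * R => ((1 + il) * (p.1 - p.2) ^+ 2 + K * p.1 + g p.2)%R.
have mh : measurable_fun [set: (R * R)%type] h.
  apply: measurable_funD; last exact: (measurableT_comp mg msnd).
  apply: measurable_funD.
    exact: (@measurable_funM _ (R * R)%type R setT (fun _ => (1 + il)%R) _ (measurable_cst _) mD).
  exact: (@measurable_funM _ (R * R)%type R setT (fun _ => K) _ (measurable_cst _) mfst).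
have pw p : ((p.1 - eta) ^+ 2 <= h p)%R.
  have li : (lam * il = 1)%R by rewrite /il divff // gt_eqF.
  have il0 : (0 < il)%R by rewrite /il invr_gt0.
  rewrite /h /g /b /K /c0 /a /m.
  have := sqr_ge0 (lam * (p.2 - zbar) - (p.1 - p.2 + zbar - eta))%R.
  move: (p.1) (p.2) => x y H.
  apply: (@le_trans _ _ ((x - eta) ^+ 2 + il * (lam * (y - zbar) - (x - y + zbar - eta)) ^+ 2)%R).
    by rewrite lerDl mulr_ge0 // ltW.
  rewrite le_eqVlt; apply/orP; left; apply/eqP; rewrite /il; field; exact: lt0r_neq0.

have mP1 : measurable_fun [set: (R * R)%type] (fun p : R * R => ((p.1 - eta) ^+ 2)%:E).
  apply/measurable_EFinP; apply: measurable_funX; apply: measurable_funB => //; exact: mfst.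
apply: (le_trans (ge0_le_integral Pi measurableT (f2 := fun p => (h p)%:E) _ mP1 _ _)).
- by move=> p _; rewrite lee_fin sqr_ge0.
- exact/measurable_EFinP.
- by move=> p _; rewrite lee_fin.
have hcost' : \int[Pi]_p ((p.1 - p.2) ^+ 2)%:E = c%:E.
  by rewrite -hcost; apply: eq_integral => p _; rewrite real_normK // num_real.
have iD : Pi.-integrable setT (fun p => ((p.1 - p.2) ^+ 2)%:E).
  apply/integrableP; split; first exact/measurable_EFinP.
  under eq_integral do rewrite abse_EFin ger0_norm ?sqr_ge0 //.
  by rewrite hcost' ltry.
have iQ2 : Q.-integrable setT (fun x => (x ^+ 2)%:E).
  apply/integrableP; split.
    by apply/measurable_EFinP; exact: measurable_funX.
  under eq_integral do rewrite abse_EFin ger0_norm ?sqr_ge0 //.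
  exact: fsm.
have iQ1 : Q.-integrable setT (fun x => x%:E).
  apply: (@le_integrable _ R R Q setT measurableT (fun x => x%:E) ((EFin \o cst 1%R) \+ (fun x => (x ^+ 2)%:E))%E).
  - exact: EFin_measurable.
  - move=> x _; rewrite (_ : _ + _ = (1 + x ^+ 2)%:E) // !abse_EFin lee_fin (@ger0_norm _ (1 + x ^+ 2)%R); last first.
      have := sqr_ge0 x; lra.
    have := sqr_ge0 (`|x| - 1)%R; rewrite -[(x ^+ 2)%R](real_normK (num_real x)).
    have := normr_ge0 x; move: (`|x|)%R => t; nra.
  - apply: integrableD => //; exact: finite_measure_integrable_cst.
have i1 : Pi.-integrable setT (fun p : R * R => (p.1)%:E).
  apply/integrableP; split; first by apply/measurable_EFinP; exact: mfst.
  have mab : measurable_fun [set: R] (fun x : R => `|x%:E|).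
    by apply: measurableT_comp => //; exact/measurable_EFinP.
  rewrite (@marg1 R Pi Q _ mab h1).
  by move/integrableP : iQ1 => [].
have i3 : Pi.-integrable setT (fun p : R * R => (g p.2)%:E).
  apply/integrableP; split.
    by apply/measurable_EFinP; exact: (measurableT_comp mg msnd).
  have mab : measurable_fun [set: R] (fun x : R => `|(g x)%:E|).
    by apply: measurableT_comp => //; exact/measurable_EFinP.
  rewrite (@marg2 R Pi _ _ mab h2).
  under eq_integral do rewrite abse_EFin.
  rewrite discr_int ?ltry //.
  by apply: measurableT_comp => //.
have Eh : \int[Pi]_p (h p)%:E =
    ((1 + il) * c + K * eta + (N'.+1%:R^-1 * \sum_(k < N'.+1) g (zt k)))%:E.
  rewrite /h; under eq_integral do rewrite EFinD EFinD (EFinM (1 + il)%R) (EFinM K).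
  rewrite integralD //; last first.
    by apply: integrableD => //; apply: integrableZl.
  rewrite integralD //; try by apply: integrableZl.
  rewrite integralZl // integralZl // hcost'.
  rewrite (@marg1 R Pi Q _ (@EFin_measurable R setT) h1) hmean.
  have mgE : measurable_fun [set: R] (fun x => (g x)%:E) by exact/measurable_EFinP.
  rewrite (@marg2 R Pi _ _ mgE h2) discr_int //.
rewrite Eh lee_fin.
have n0 : (N'.+1%:R != 0 :> R)%R by rewrite pnatr_eq0.
have Sz : (\sum_(i < N'.+1) zeta i = zbar * N'.+1%:R)%R by rewrite hzbar mulfVK.
have S2 : (\sum_(i < N'.+1) (zeta i - eta) ^+ 2 = sigma2 * N'.+1%:R)%R by rewrite hsigma2 mulfVK.
have Sg : (\sum_(k < N'.+1) g (zt k) =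
    a * \sum_(i < N'.+1) (zeta i - eta) ^+ 2 + b * \sum_(i < N'.+1) zeta i + N'.+1%:R * c0)%R.
  rewrite /g /zt; under eq_bigr => k _ do rewrite inord_val.
  by rewrite big_split big_split /= -!mulr_sumr sumr_const card_ord mulr_natl.
rewrite Sg Sz S2 le_eqVlt; apply/orP; left; apply/eqP.
rewrite /b /K /c0 /a /m /il. field.
by rewrite lt0r_neq0 //= -natr1 addrC.
Qed.



End ub.

End partE.

Section sums.
Context (R : realType).

Lemma sum_quad (n : nat) (d : nat -> R) (al be ga : R) :
  \sum_(k < n) (al * d k ^+ 2 + be * d k + ga) =
  al * \sum_(k < n) d k ^+ 2 + be * \sum_(k < n) d k + n%:R * ga.
Proof.
by rewrite big_split big_split /= -!mulr_sumr sumr_const card_ord mulr_natl.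
Qed.

Lemma split_sum (N' : nat) (F : nat -> R) :
  \sum_(k < (N' + N'.+1).+1) F k = \sum_(k < N'.+1) F k + \sum_(k < N'.+1) F (N'.+1 + k)%N.
Proof.
have -> : ((N' + N'.+1).+1 = N'.+1 + N'.+1)%N by rewrite addSn.
by rewrite big_split_ord.
Qed.

Variables (N' : nat) (zeta : 'I_N'.+1 -> R) (eta : R).
Let n := N'.+1.
Let zt := fun k : nat => zeta (inord k).
Let zbar := (\sum_(i < n) zeta i) / n%:R.
Let sigma2 := (\sum_(i < n) (zeta i - eta) ^+ 2) / n%:R.
Let m := zbar - eta.

Lemma n0 : (n%:R != 0 :> R). Proof. by rewrite pnatr_eq0. Qed.

Lemma sum_zt : \sum_(k < n) zt k = \sum_(i < n) zeta i.
Proof. by apply: eq_bigr => k _; rewrite /zt inord_val. Qed.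

Lemma sum_d : \sum_(k < n) (zt k - zbar) = 0.
Proof.
rewrite sumrB sum_zt sumr_const card_ord /zbar -[X in _ - X]mulr_natr mulfVK ?subrr //; exact: n0.
Qed.

Lemma sum_d2 : \sum_(k < n) (zt k - zbar) ^+ 2 = n%:R * (sigma2 - m ^+ 2).
Proof.
have -> : \sum_(k < n) (zt k - zbar) ^+ 2 =
    \sum_(k < n) (1 * (zt k - eta) ^+ 2 + (- 2 * m) * (zt k - eta) + m ^+ 2).
  by apply: eq_bigr => k _; rewrite /m; ring.
rewrite (sum_quad n (fun k => zt k - eta)) sumrB sumr_const card_ord.
have -> : \sum_(k < n) (zt k - eta) ^+ 2 = \sum_(i < n) (zeta i - eta) ^+ 2.
  by apply: eq_bigr => k _; rewrite /zt inord_val.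
rewrite sum_zt /sigma2 /m /zbar -[eta *+ _]mulr_natr.
have := n0; move: (\sum_(i < n) zeta i) (\sum_(i < n) (zeta i - eta) ^+ 2) (n%:R : R) => s1 s2 nn nn0.
field; exact: nn0.
Qed.

Lemma v_ge0 : 0 <= sigma2 - m ^+ 2.
Proof.
have := sum_d2; have : 0 <= \sum_(k < n) (zt k - zbar) ^+ 2.
  by apply: sumr_ge0 => k _; exact: sqr_ge0.
move=> h E; move: h; rewrite E pmulr_rge0 // ltr0n.
Qed.
End sums.

Section partG.
Local Open Scope ereal_scope.

Lemma ub_all (R : realType) (N' : nat) (zeta : 'I_N'.+1 -> R) (eta eps : R)
  (Q : probability R R) (zbar sigma2 : R) :
  zbar = ((\sum_(i < N'.+1) zeta i) / N'.+1%:R)%R ->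
  sigma2 = ((\sum_(i < N'.+1) (zeta i - eta) ^+ 2) / N'.+1%:R)%R ->
  ((zbar - eta) ^+ 2 <= eps ^+ 2)%R ->
  finite_second_moment Q -> W2 (Q : set R -> \bar R) (empirical zeta) <= eps%:E ->
  \int[Q]_x x%:E = eta%:E ->
  \int[Q]_x ((x - eta) ^+ 2)%:E <=
    ((Num.sqrt (sigma2 - (zbar - eta) ^+ 2) + Num.sqrt (eps ^+ 2 - (zbar - eta) ^+ 2)) ^+ 2)%:E.
Proof.
move=> hz hs hball fsm hW hmean.
set m := (zbar - eta)%R.
set v := (sigma2 - m ^+ 2)%R.
set w := (eps ^+ 2 - m ^+ 2)%R.
have v0 : (0 <= v)%R by rewrite /v /m hz hs; exact: v_ge0.
have w0 : (0 <= w)%R by rewrite /w subr_ge0.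
have W0 : 0 <= W2sq (Q : set R -> \bar R) (empirical zeta).
  apply: le_ereal_inf_tmp => y [Pi _ <-]; apply: integral_ge0 => p _.
  by rewrite lee_fin sqr_ge0.
move: hW; rewrite /W2; case E: (W2sq _ _) => [r| |] //=; last first.
  by rewrite E in W0.
rewrite lee_fin => hr.
have r0 : (0 <= r)%R by rewrite E lee_fin in W0.
have reps : (r <= eps ^+ 2)%R.
  have := sqr_sqrtr r0; have := sqrtr_ge0 r; move: (Num.sqrt r) hr => s hs1 hs2 hs3.
  rewrite -hs3; nra.
have key lam : (0 < lam)%R -> forall del, (0 < del)%R ->
    \int[Q]_x ((x - eta) ^+ 2)%:E <= ((1 + lam) * v + (1 + lam^-1) * (w + del))%:E.
  move=> l0 del d0.
  have : W2sq (Q : set R -> \bar R) (empirical zeta) < (r + del)%:E.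
    by rewrite E lte_fin ltrDl.
  move/ereal_inf_lt => [y [Pi hPi <-]] hy.
  have y0 : 0 <= \int[Pi]_p (`|p.1 - p.2| ^+ 2)%:E.
    by apply: integral_ge0 => p _; rewrite lee_fin sqr_ge0.
  have yfin : \int[Pi]_p (`|p.1 - p.2| ^+ 2)%:E \is a fin_num.
    by rewrite ge0_fin_numE // (lt_le_trans hy) ?leey.
  set c := fine (\int[Pi]_p (`|p.1 - p.2| ^+ 2)%:E).
  have hc : \int[Pi]_p (`|p.1 - p.2| ^+ 2)%:E = c%:E by rewrite fineK.
  have := @ub_coupling R N' zeta eta lam c Q Pi l0 fsm hmean hPi hc zbar sigma2 hz hs.
  move/le_trans; apply; rewrite lee_fin lerD2l ler_wpM2l //.
    by rewrite addr_ge0 // invr_ge0 ltW.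
  move: hy; rewrite hc lte_fin /w /m => hy; lra.
have Sfin : \int[Q]_x ((x - eta) ^+ 2)%:E \is a fin_num.
  rewrite ge0_fin_numE; last by apply: integral_ge0 => x _; rewrite lee_fin sqr_ge0.
  exact: (le_lt_trans (key 1%R ltr01 1%R ltr01) (ltry _)).
rewrite -(fineK Sfin) lee_fin; apply: final_real => // lam l0 del d0.
by rewrite -lee_fin fineK //; apply: key.
Qed.

End partG.

Section lb.
Context (R : realType) (N' : nat) (zeta : 'I_N'.+1 -> R) (eta eps : R).
Hypothesis heps : 0 < eps.
Let n := N'.+1.
Let zt := fun k : nat => zeta (inord k).
Let zbar := (\sum_(i < n) zeta i) / n%:R.
Let sigma2 := (\sum_(i < n) (zeta i - eta) ^+ 2) / n%:R.
Let m := zbar - eta.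
Hypothesis hball : m ^+ 2 <= eps ^+ 2.
Let v := sigma2 - m ^+ 2.
Let w := eps ^+ 2 - m ^+ 2.
Let a := Num.sqrt v.
Let bw := Num.sqrt w.
Let cc := bw / a.
Let bb := Num.sqrt (w - cc ^+ 2 * v).
Let d := fun k : nat => zt k - zbar.

Let v0 : 0 <= v. Proof. exact: v_ge0. Qed.
Let w0 : 0 <= w. Proof. by rewrite /w subr_ge0. Qed.

Let hcv_hbb : cc * v = a * bw /\ cc ^+ 2 * v + bb ^+ 2 = w.
Proof.
have va : v = a ^+ 2 by rewrite sqr_sqrtr.
have wb : w = bw ^+ 2 by rewrite sqr_sqrtr.
have [a0|a0] := eqVneq a 0.
  rewrite /bb; have ->: cc = 0 by rewrite /cc a0 invr0 mulr0.
  split; first by rewrite mul0r a0 mul0r.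
  by rewrite expr2 !mul0r subr0 sqr_sqrtr // add0r.
have e1 : cc * v = a * bw by rewrite /cc va; field.
have e2 : cc ^+ 2 * v = w by rewrite /cc va wb; field.
by split => //; rewrite /bb e2 subrr sqrtr0 expr2 mul0r addr0.
Qed.

Definition idx (k : nat) : nat := if (k < n)%N then k else (k - n)%N.
Definition sg (k : nat) : R := if (k < n)%N then 1 else -1.
Definition pts (k : nat) : R := eta + (1 + cc) * d (idx k) + sg k * bb.
Definition Q0 : probability R R := discr _ R R (N' + N'.+1) pts.
Definition Pi0 : probability (R * R)%type R :=
  discr _ (R * R)%type R (N' + N'.+1) (fun k => (pts k, zt (idx k))).

Lemma idx_lo (k : 'I_n) : idx k = k. Proof. by rewrite /idx ltn_ord. Qed.
Lemma idx_hi (k : 'I_n) : idx (n + k) = k.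
Proof. by rewrite /idx ltnNge leq_addr /= addKn. Qed.
Lemma sg_lo (k : 'I_n) : sg k = 1. Proof. by rewrite /sg ltn_ord. Qed.
Lemma sg_hi (k : 'I_n) : sg (n + k) = -1.
Proof. by rewrite /sg ltnNge leq_addr. Qed.

Lemma e2n : ((N' + N'.+1).+1)%:R = (2 * n%:R : R).
Proof. by rewrite -addSn natrD mulr_natl mulr2n. Qed.


Let sd : \sum_(k < n) d k = 0. Proof. exact: (sum_d R N' zeta). Qed.
Let sd2 : \sum_(k < n) d k ^+ 2 = n%:R * v. Proof. exact: (sum_d2 R N' zeta eta). Qed.

Lemma pair_sum (F : nat -> R) :
  \sum_(k < (N' + N'.+1).+1) F k = \sum_(k < n) (F k + F (n + k)%N).
Proof. by rewrite (split_sum R N' F) big_split. Qed.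

Lemma sum_pts : \sum_(k < (N' + N'.+1).+1) pts k = 2 * n%:R * eta.
Proof.
rewrite pair_sum (eq_bigr (fun k : 'I_n => 0 * d k ^+ 2 + (2 * (1 + cc)) * d k + 2 * eta)); last first.
  by move=> k _; rewrite /pts idx_lo idx_hi sg_lo sg_hi; ring.
rewrite (sum_quad R n d) sd; ring.
Qed.

Lemma sum_pts2 : \sum_(k < (N' + N'.+1).+1) (pts k - eta) ^+ 2 =
  2 * n%:R * ((1 + cc) ^+ 2 * v + bb ^+ 2).
Proof.
rewrite (pair_sum (fun k => (pts k - eta) ^+ 2)).
rewrite (eq_bigr (fun k : 'I_n => (2 * (1 + cc) ^+ 2) * d k ^+ 2 + 0 * d k + 2 * bb ^+ 2)); last first.
  by move=> k _; rewrite /pts idx_lo idx_hi sg_lo sg_hi; ring.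
rewrite (sum_quad R n d) sd sd2; ring.
Qed.

Lemma sum_cost : \sum_(k < (N' + N'.+1).+1) (pts k - zt (idx k)) ^+ 2 =
  2 * n%:R * eps ^+ 2.
Proof.
rewrite (pair_sum (fun k => (pts k - zt (idx k)) ^+ 2)).
rewrite (eq_bigr (fun k : 'I_n => (2 * cc ^+ 2) * d k ^+ 2 + (- 4 * m * cc) * d k + 2 * (m ^+ 2 + bb ^+ 2))); last first.
  by move=> k _; rewrite /pts idx_lo idx_hi sg_lo sg_hi /d /m; ring.
rewrite (sum_quad R n d) sd sd2.
have [_ hbb] := hcv_hbb.
rewrite -[in RHS](subrK (m ^+ 2) (eps ^+ 2)) -/w -hbb; ring.
Qed.

Local Open Scope ereal_scope.

Lemma Q0_int (f : R -> R) : measurable_fun [set: R] f ->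
  \int[Q0]_x (f x)%:E = ((((N' + N'.+1).+1)%:R)^-1 * \sum_(k < (N' + N'.+1).+1) f (pts k))%:E.
Proof. move=> mf; exact: (@discr_int _ R R (N' + N'.+1) pts f mf). Qed.

Lemma Pi0_int (f : R * R -> R) : measurable_fun [set: (R * R)%type] f ->
  \int[Pi0]_x (f x)%:E = ((((N' + N'.+1).+1)%:R)^-1 *
     \sum_(k < (N' + N'.+1).+1) f (pts k, zt (idx k)))%:E.
Proof. move=> mf; exact: (@discr_int _ (R * R)%type R (N' + N'.+1) _ f mf). Qed.

Lemma n0' : (n%:R != 0 :> R)%R. Proof. by rewrite pnatr_eq0. Qed.

Lemma Q0_mean : \int[Q0]_x x%:E = eta%:E.
Proof.
rewrite (Q0_int (fun x => x)) ?sum_pts ?e2n; last exact: measurable_id.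
congr (_%:E); have := n0'; move: (n%:R : R) => nn nn0; field.
by rewrite ?nn0 ?pnatr_eq0.
Qed.

Lemma Q0_var : \int[Q0]_x ((x - eta) ^+ 2)%:E = ((a + bw) ^+ 2)%:E.
Proof.
rewrite (Q0_int (fun x => (x - eta) ^+ 2)%R); last first.
  by apply: measurable_funX; exact: measurable_funB.
rewrite sum_pts2 e2n; congr (_%:E).
have [hcv hbb] := hcv_hbb.
have va : v = (a ^+ 2)%R by rewrite sqr_sqrtr.
have wb : w = (bw ^+ 2)%R by rewrite sqr_sqrtr.
have := n0'; move: (n%:R : R) => nn nn0.
have -> : ((2 * nn)^-1 * (2 * nn * ((1 + cc) ^+ 2 * v + bb ^+ 2)) = (1 + cc) ^+ 2 * v + bb ^+ 2)%R.
  by field; rewrite ?nn0 ?pnatr_eq0.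
have -> : ((1 + cc) ^+ 2 * v + bb ^+ 2 = v + 2 * (cc * v) + (cc ^+ 2 * v + bb ^+ 2))%R by ring.
rewrite hcv hbb va wb; ring.
Qed.

Lemma Q0_fsm : finite_second_moment Q0.
Proof.
by rewrite /finite_second_moment (Q0_int (fun x => x ^+ 2)%R) ?ltry //; exact: measurable_funX.
Qed.

Lemma Q0E A : (Q0 : set R -> \bar R) A = discr _ R R (N' + N'.+1) pts A.
Proof. by []. Qed.
Lemma Pi0E A : (Pi0 : set (R * R) -> \bar R) A =
  discr _ (R * R)%type R (N' + N'.+1) (fun k => (pts k, zt (idx k))) A.
Proof. by []. Qed.

Lemma Pi0_coupling : coupling (Q0 : set R -> \bar R) (empirical zeta) Pi0.
Proof.
move=> A mA; split.
  rewrite Pi0E Q0E !discrE; congr ((_ * _)%R%:E); apply: eq_bigr => k _.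
  by rewrite !indicE in_setX in_setT andbT.
rewrite empirical_discr Pi0E !discrE (pair_sum (fun k => \1_(setT `*` A) (pts k, zt (idx k)))).
rewrite (eq_bigr (fun k : 'I_n => 2 * \1_A (zt k)))%R; last first.
  move=> k _; rewrite idx_lo idx_hi !indicE !in_setX !in_setT /=.
  by rewrite -/(zt k) mulr_natl mulr2n.
rewrite -mulr_sumr e2n; congr (_%:E).
have := n0'; move: (n%:R : R) => nn nn0; field.
by rewrite ?nn0 ?pnatr_eq0.
Qed.

Lemma Pi0_cost : \int[Pi0]_p (`|p.1 - p.2| ^+ 2)%:E = (eps ^+ 2)%:E.
Proof.
rewrite (Pi0_int (fun p => `|p.1 - p.2| ^+ 2)%R); last first.
  apply: measurable_funX; apply: measurableT_comp => //.
  apply: measurable_funB; [exact: mfst|exact: msnd].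
under eq_bigr do rewrite real_normK ?num_real //.
rewrite sum_cost e2n; congr (_%:E).
have := n0'; move: (n%:R : R) => nn nn0; field.
by rewrite ?nn0 ?pnatr_eq0.
Qed.

Lemma Q0_W2 : W2 (Q0 : set R -> \bar R) (empirical zeta) <= eps%:E.
Proof.
have W0 : 0 <= W2sq (Q0 : set R -> \bar R) (empirical zeta).
  apply: le_ereal_inf_tmp => y [Pi _ <-]; apply: integral_ge0 => p _.
  by rewrite lee_fin sqr_ge0.
have W1 : W2sq (Q0 : set R -> \bar R) (empirical zeta) <= (eps ^+ 2)%:E.
  apply: ereal_inf_lbound; exists Pi0; first exact: Pi0_coupling.
  exact: Pi0_cost.
rewrite /W2; move: W0 W1; case: (W2sq _ _) => [r| |] //= r0 r1.
rewrite lee_fin; rewrite lee_fin in r0 r1.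
have := sqr_sqrtr r0; have := sqrtr_ge0 r; move: (Num.sqrt r) => s hs1 hs2.
rewrite -hs2 in r1; have := ler_wsqrtr r1; rewrite !sqrtr_sqr !ger0_norm //; exact: ltW.
Qed.

End lb.

Theorem theorem5 (R : realType) (N : nat) (hN : (0 < N)%N)
  (zeta : 'I_N -> R) (eta eps : R) (heps : 0 < eps)
  (hball : eps ^+ 2 >= ((\sum_(i < N) zeta i) / N%:R - eta) ^+ 2) :
  let zbar := (\sum_(i < N) zeta i) / N%:R in
  let sigma2 := (\sum_(i < N) (zeta i - eta) ^+ 2) / N%:R in
  ereal_sup [set (\int[Q]_x ((x - eta) ^+ 2)%:E)%E
            | Q in [set Q : probability R R |
                      [/\ finite_second_moment Q,
                          (W2 (Q : set R -> \bar R) (empirical zeta) <= eps%:E)%E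
                        & (\int[Q]_x x%:E = eta%:E)%E]]]
  = ((Num.sqrt (sigma2 - (zbar - eta) ^+ 2)
      + Num.sqrt (eps ^+ 2 - (zbar - eta) ^+ 2)) ^+ 2)%:E.
Proof.
move: zeta hball; case: N hN => [//|N'] _ zeta hball zbar sigma2.
apply: le_anti; apply/andP; split.
  apply: ge_ereal_sup => y [Q [fsm hW hmean] <-].
  exact: (@ub_all R N' zeta eta eps Q zbar sigma2 erefl erefl hball fsm hW hmean).
rewrite -(@Q0_var R N' zeta eta eps hball).
apply: ereal_sup_ubound; exists (Q0 R N' zeta eta eps) => //.
split; [exact: Q0_fsm | exact: Q0_W2 | exact: Q0_mean].
Qed.
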